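(* Let $A\in\mathcal{C}_n$ and let $u,v$ be minimal zeros of $A$ with supports $\operatorname{Supp}(u)=I$, $\operatorname{Supp}(v)=J$. Assume that $J\setminus I=\{k\}$ consists of exactly one element. Then every zero $w$ of $A$ with $\operatorname{Supp}(w)\subset I\cup J$ can be written as $w=\alpha u+\beta v$ with $\alpha,\beta\ge 0$. In particular, up to multiplication by a positive constant, $A$ has no minimal zeros $w$ with $\operatorname{Supp}(w)\subset I\cup J$ other than $u$ and $v$.
   Context: $\mathcal{C}_n$ denotes the cone of copositive matrices: real symmetric $n\times n$ matrices $A$ with $x^TAx\ge 0$ for all $x\in\mathbb{R}^n_+$. For $A\in\mathcal{C}_n$, a zero of $A$ is a nonzero vector $u\in\mathbb{R}^n_+$ with $u^TAu=0$. The support of $u\in\mathbb{R}^n$ is $\operatorname{Supp}(u)=\{i : u_i\neq 0\}$. A zero $u$ of $A$ is minimal if there is no zero $v$ of $A$ with $\operatorname{Supp}(v)\subsetneq\operatorname{Supp}(u)$. *)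

(* Defs.v *)
(* copositive matrices over an arbitrary real field R
   (the reals are an instance; the statement is purely order-algebraic). *)
From HB Require Import structures.
From mathcomp Require Import all_boot all_order all_algebra.
Set Implicit Arguments. Unset Strict Implicit. Unset Printing Implicit Defensive.
Import Order.TTheory GRing.Theory Num.Theory.
Local Open Scope ring_scope.

Definition qform {R : realFieldType} {n : nat} (A : 'M[R]_n) (x : 'cV[R]_n) : R :=
  (x^T *m A *m x) 0 0.

Definition nonneg_vec {R : realFieldType} {n : nat} (x : 'cV[R]_n) : Prop :=
  forall i, 0 <= x i 0.

Definition copositive {R : realFieldType} {n : nat} (A : 'M[R]_n) : Prop :=
  A^T = A /\ forall x : 'cV[R]_n, nonneg_vec x -> 0 <= qform A x.

Definition supp {R : realFieldType} {n : nat} (x : 'cV[R]_n) : {set 'I_n} :=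
  [set i | x i 0 != 0].

Definition is_zero_of {R : realFieldType} {n : nat} (A : 'M[R]_n) (u : 'cV[R]_n) : Prop :=
  nonneg_vec u /\ u <> 0 /\ qform A u = 0.

Definition minimal_zero {R : realFieldType} {n : nat} (A : 'M[R]_n) (u : 'cV[R]_n) : Prop :=
  is_zero_of A u /\
  forall v : 'cV[R]_n, is_zero_of A v -> ~ (supp v \proper supp u).

(* Main.v *)
Require Import Defs.
From HB Require Import structures.
From mathcomp Require Import all_boot all_order all_algebra.
From mathcomp Require Import ring lra.
Import Order.TTheory GRing.Theory Num.Theory.
Local Open Scope ring_scope.

Definition Bf {R : realFieldType} {n : nat} (A : 'M[R]_n) (x y : 'cV[R]_n) : R :=
  (x^T *m A *m y) 0 0.

Lemma Bf_sym (R : realFieldType) n (A : 'M[R]_n) x y :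
  A^T = A -> Bf A x y = Bf A y x.
Proof.
move=> sA; rewrite /Bf; transitivity ((y^T *m A *m x)^T 0 0); last by rewrite mxE.
by rewrite !trmx_mul trmxK sA mulmxA.
Qed.

Lemma qlin (R : realFieldType) n (A : 'M[R]_n) x y a b :
  A^T = A -> qform A (a *: x + b *: y) =
    a ^+ 2 * qform A x + 2 * a * b * Bf A x y + b ^+ 2 * qform A y.
Proof.
move=> sA; rewrite /qform !(linearD, linearZ) /= !(mulmxDl, mulmxDr).
rewrite -!(scalemxAl, scalemxAr).
rewrite /Bf.
set P1 := x^T *m A *m x; set P2 := y^T *m A *m x; set P3 := x^T *m A *m y.
set P4 := y^T *m A *m y.
have h : P2 0 0 = P3 0 0 by exact: (Bf_sym _ _ A y x sA).
clearbody P1 P2 P3 P4. rewrite !mxE h; ring.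
Qed.

Lemma Bf_col (R : realFieldType) n (A : 'M[R]_n) x u :
  Bf A x u = \sum_i x i 0 * (A *m u) i 0.
Proof. by rewrite /Bf -mulmxA mxE; apply: eq_bigr => i _; rewrite mxE. Qed.

Lemma qform_e (R : realFieldType) n (A : 'M[R]_n) i :
  qform A (delta_mx i 0) = A i i.
Proof. by rewrite /qform trmx_delta -rowE -colE !mxE. Qed.

Lemma Bf_e (R : realFieldType) n (A : 'M[R]_n) u i :
  Bf A (delta_mx i 0) u = (A *m u) i 0.
Proof. by rewrite /Bf trmx_delta -mulmxA -rowE mxE. Qed.

Lemma small_t (R : realFieldType) (b c d : R) : 0 < d ->
  (forall t, 0 < t -> t <= d -> 0 <= b * t + c * t ^+ 2) -> 0 <= b.
Proof.
move=> d0 H; rewrite leNgt; apply/negP => bneg.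
set e := - b; have e0 : 0 < e by rewrite /e oppr_gt0.
have [C [C0 cC]] : exists C : R, 0 <= C /\ c <= C.
  by exists `|c|; split; [exact: normr_ge0 | exact: ler_norm].
set D := e + C * d.
have Cd : 0 <= C * d by exact: mulr_ge0 C0 (ltW d0).
have D0 : 0 < D by rewrite /D; lra.
set t := d * e / D.
have tD : t * D = d * e by rewrite /t mulfVK // gt_eqF.
have t0 : 0 < t by rewrite /t divr_gt0 // mulr_gt0.
have td : t <= d.
  rewrite -(ler_pM2r D0) tD ler_pM2l // /D; lra.
have Cte : C * t < e.
  rewrite -(ltr_pM2r D0) -mulrA tD /D. have ee : 0 < e * e by exact: mulr_gt0.
  have -> : C * (d * e) = e * (C * d) by ring. by rewrite mulrDr addrC ltrDl.
have ctC : c * t <= C * t by rewrite ler_pM2r.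
have h1 : 0 < t * (e - c * t) by apply: mulr_gt0 => //; lra.
have := H t t0 td.
have -> : b * t + c * t ^+ 2 = - (t * (e - c * t)) by rewrite /e; ring.
lra.
Qed.

Lemma Au_zero (R : realFieldType) n (A : 'M[R]_n) (u : 'cV[R]_n) i :
  copositive A -> is_zero_of A u -> u i 0 != 0 -> (A *m u) i 0 = 0.
Proof.
move=> [sA cop] [nu [_ qu]] ui.
have ui0 : 0 < u i 0 by rewrite lt_def ui nu.
set a := (A *m u) i 0.
have key : forall t, (forall j, 0 <= u j 0 + t * (delta_mx i 0 : 'cV[R]_n) j 0) ->
    0 <= 2 * t * a + t ^+ 2 * A i i.
  move=> t nt; have := cop (1 *: u + t *: delta_mx i 0).
  rewrite qlin // qform_e qu (Bf_sym _ _ A u) // Bf_e -/a.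
  have -> : 1 ^+ 2 * 0 + 2 * 1 * t * a + t ^+ 2 * A i i = 2 * t * a + t ^+ 2 * A i i by ring.
  apply=> j; rewrite !mxE mul1r; by move: (nt j); rewrite mxE.
have pos : forall t, 0 <= t -> forall j, 0 <= u j 0 + t * (delta_mx i 0 : 'cV[R]_n) j 0.
  move=> t t0 j; rewrite mxE; apply: addr_ge0 => //; apply: mulr_ge0 => //.
have neg : forall t, 0 <= t -> t <= u i 0 ->
    forall j, 0 <= u j 0 + (- t) * (delta_mx i 0 : 'cV[R]_n) j 0.
  move=> t t0 tu j; rewrite mxE; case: (eqVneq j i) => [->|ji] /=.
    by rewrite mulr1; lra.
  by rewrite mulr0 addr0.
have h1 : 0 <= 2 * a.
  apply: (@small_t _ _ (A i i) (u i 0)) => // t t0 td.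
  have := key t (pos t (ltW t0)); lra.
have h2 : 0 <= - (2 * a).
  apply: (@small_t _ _ (A i i) (u i 0)) => // t t0 td.
  have := key (- t) (neg t (ltW t0) td); rewrite sqrrN; lra.
lra.
Qed.

Lemma BT4 (R : realFieldType) n (A : 'M[R]_n) (u x : 'cV[R]_n) :
  copositive A -> is_zero_of A u -> (forall i, u i 0 = 0 -> x i 0 = 0) ->
  Bf A u x = 0.
Proof.
move=> cA zu hx; rewrite Bf_sym; last by case: cA.
rewrite Bf_col; apply: big1 => i _.
case: (eqVneq (u i 0) 0) => [/hx -> | ui]; first by rewrite mul0r.
by rewrite (Au_zero _ _ _ _ _ cA zu ui) mulr0.
Qed.

Lemma T3 (R : realFieldType) n (A : 'M[R]_n) (u y : 'cV[R]_n) j :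
  minimal_zero A u -> nonneg_vec y -> qform A y = 0 ->
  (forall i, u i 0 = 0 -> y i 0 = 0) -> y j 0 = 0 -> u j 0 != 0 -> y = 0.
Proof.
move=> [_ mu] ny qy hy yj uj; apply/eqP/negPn/negP => y0.
apply: (mu y); first by split => //; split => //; exact/eqP.
rewrite properE; apply/andP; split.
  apply/subsetP => i; rewrite !inE; apply: contra => /eqP/hy ->; done.
by apply/negP => /subsetP/(_ j); rewrite !inE uj yj eqxx => /(_ isT).
Qed.

Lemma ratio (R : realFieldType) n (u x : 'cV[R]_n) j0 : x j0 0 < 0 ->
  exists j, x j 0 < 0 /\ forall i, x i 0 < 0 -> u j 0 / - x j 0 <= u i 0 / - x i 0.
Proof.
move=> xj0.
case: (@arg_minP _ R _ j0 (fun i => x i 0 < 0) (fun i => u i 0 / - x i 0)) => //.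
move=> j xj H; exists j; split => // i xi; exact: H.
Qed.

Lemma Lmult (R : realFieldType) n (A : 'M[R]_n) (u x : 'cV[R]_n) j0 :
  copositive A -> minimal_zero A u -> (forall i, u i 0 = 0 -> x i 0 = 0) ->
  qform A x <= 0 -> x j0 0 < 0 -> exists c, x = c *: u.
Proof.
move=> cA mu hx qx xj0.
have [[nu [u0 qu]] _] := mu.
have [j [xj H]] := ratio _ _ u x j0 xj0.
have uj : u j 0 != 0.
  apply/negP => /eqP /hx xj'; by rewrite xj' ltxx in xj.
have uj0 : 0 < u j 0 by rewrite lt_def uj nu.
have nxj : 0 < - x j 0 by rewrite oppr_gt0.
set t := u j 0 / - x j 0.
have t0 : 0 < t by rewrite /t divr_gt0.
set y := 1 *: u + t *: x.
have ye : forall i, y i 0 = u i 0 + t * x i 0 by move=> i; rewrite !mxE mul1r.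
have ny : nonneg_vec y.
  move=> i; rewrite ye; case: (ltP (x i 0) 0) => xi.
    have := H i xi; rewrite ler_pdivlMr ?oppr_gt0 // => h.
    have : t * - x i 0 <= u i 0.
      by apply: le_trans h; rewrite /t.
    lra.
  apply: addr_ge0 => //; apply: mulr_ge0 => //; exact: ltW.
have qy : qform A y = 0.
  apply/eqP; rewrite eq_le; apply/andP; split; last by case: cA => _; apply.
  rewrite /y qlin; last by case: cA.
  rewrite qu (BT4 _ _ _ _ _ cA (proj1 mu) hx).
  have := mulr_ge0 (ltW t0) (ltW t0); rewrite -expr2 => tt.
  have := ler_wpM2l tt qx; rewrite mulr0; lra.
have y0 : y = 0.
  apply: (T3 _ _ _ _ _ j mu ny qy).
  - by move=> i ui; rewrite ye ui (hx i ui) mulr0 addr0.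
  - have xjn : x j 0 != 0 by rewrite lt_eqF.
    by rewrite ye /t; field.
  - exact: uj.
exists (- t^-1); apply/matrixP => a b; rewrite (ord1 b).
have := congr1 (fun M : 'cV[R]_n => M a 0) y0; rewrite /= ye mxE => e.
rewrite mxE; have tn : t != 0 by rewrite gt_eqF.
have -> : x a 0 = (u a 0 + t * x a 0 - u a 0) / t by field.
rewrite e; field; exact: tn.
Qed.

Lemma part1 (R : realFieldType) (n : nat) (A : 'M[R]_n)
    (u v : 'cV[R]_n) (k : 'I_n) :
  copositive A -> minimal_zero A u -> minimal_zero A v ->
  supp v :\: supp u = [set k] ->
  forall w : 'cV[R]_n, is_zero_of A w -> supp w \subset supp u :|: supp v ->
     exists alpha beta : R, [/\ 0 <= alpha, 0 <= beta & w = alpha *: u + beta *: v].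
Proof.
move=> cA mu mv hK w zw sw.
have sA : A^T = A by case: cA.
have [nu [u0 qu]] := proj1 mu.
have [nv [v0 qv]] := proj1 mv.
have [nw [w0 qw]] := zw.
have hk : k \in supp v :\: supp u by rewrite hK set11.
move: (hk); rewrite !inE => /andP [uk vk].
move: uk; rewrite negbK => /eqP uk.
have vk0 : 0 < v k 0 by rewrite lt_def vk nv.
have vkn : v k 0 != 0 by exact: vk.
set s := w k 0 / v k 0.
have s0 : 0 <= s by rewrite /s divr_ge0 // ltW.
have hv : forall i, u i 0 = 0 -> i != k -> v i 0 = 0.
  move=> i ui ik; apply/eqP/negP => /negP vi.
  have : i \in supp v :\: supp u by rewrite !inE vi ui eqxx.
  by rewrite hK inE (negbTE ik).
have hw : forall i, u i 0 = 0 -> i != k -> w i 0 = 0.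
  move=> i ui ik; apply/eqP/negP => /negP wi.
  have : i \in supp w by rewrite inE.
  move/(subsetP sw); rewrite !inE ui eqxx /= (hv i ui ik) eqxx //.
have Bwv : 0 <= Bf A w v.
  have := proj2 cA (1 *: w + 1 *: v).
  rewrite qlin // qw qv.
  have h : nonneg_vec (1 *: w + 1 *: v).
    move=> i; rewrite !mxE !mul1r; exact: addr_ge0.
  move/(_ h); lra.
set x := 1 *: w + (- s) *: v.
set x' := (-1) *: w + s *: v.
have xe : forall i, x i 0 = w i 0 - s * v i 0.
  by move=> i; rewrite !mxE mul1r mulNr.
have x'e : forall i, x' i 0 = - x i 0.
  by move=> i; rewrite xe !mxE mulN1r opprB addrC.
have hx : forall i, u i 0 = 0 -> x i 0 = 0.
  move=> i ui; rewrite xe; case: (eqVneq i k) => [->|ik].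
    by rewrite /s mulfVK // subrr.
  by rewrite (hw i ui ik) (hv i ui ik) mulr0 subrr.
have hx' : forall i, u i 0 = 0 -> x' i 0 = 0.
  by move=> i ui; rewrite x'e hx // oppr0.
have qx : qform A x <= 0.
  rewrite /x qlin // qw qv.
  have := mulr_ge0 s0 Bwv; lra.
have qx' : qform A x' <= 0.
  rewrite /x' qlin // qw qv.
  have := mulr_ge0 s0 Bwv; lra.
have [c xc] : exists c, x = c *: u.
  case: (pickP (fun i => x i 0 < 0)) => [j0 xj0|nneg].
    exact: (Lmult _ _ _ _ _ j0 cA mu hx qx xj0).
  case: (pickP (fun i => 0 < x i 0)) => [j0 xj0|npos].
    have xj0' : x' j0 0 < 0 by rewrite x'e oppr_lt0.
    have [c hc] := Lmult _ _ _ _ _ j0 cA mu hx' qx' xj0'.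
    exists (- c); apply/matrixP => a b; rewrite (ord1 b).
    have := congr1 (fun M : 'cV[R]_n => M a 0) hc; rewrite /= x'e xe [in RHS]mxE => h.
    rewrite mxE; lra.
  exists 0; apply/matrixP => a b; rewrite (ord1 b) !mxE mul0r.
  move/negbT: (nneg a); move/negbT: (npos a); rewrite -!leNgt => h1 h2.
  rewrite xe in h1 h2; lra.
have we : w = c *: u + s *: v.
  apply/matrixP => a b; rewrite (ord1 b).
  have := congr1 (fun M : 'cV[R]_n => M a 0) xc; rewrite /= xe [in RHS]mxE => h.
  rewrite !mxE; lra.
exists c, s; split => //.
rewrite leNgt; apply/negP => c0.
apply: ((proj2 mv) u (proj1 mu)).
rewrite properE; apply/andP; split; last first.
  by apply/negP => /subsetP /(_ k); rewrite !inE vk uk eqxx => /(_ isT).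
apply/subsetP => i; rewrite !inE => ui.
have ui0 : 0 < u i 0 by rewrite lt_def ui nu.
have := nw i; rewrite we !mxE => h.
have p : 0 < (- c) * u i 0 by apply: mulr_gt0 => //; rewrite oppr_gt0.
apply/negP => /eqP vi. move: h; rewrite vi mulr0 addr0. move: p; rewrite mulNr. lra.
Qed.

Theorem corollary3p13 (R : realFieldType) (n : nat) (A : 'M[R]_n)
    (u v : 'cV[R]_n) (k : 'I_n) :
  copositive A -> minimal_zero A u -> minimal_zero A v ->
  supp v :\: supp u = [set k] ->
  (forall w : 'cV[R]_n, is_zero_of A w -> supp w \subset supp u :|: supp v ->
     exists alpha beta : R, [/\ 0 <= alpha, 0 <= beta & w = alpha *: u + beta *: v])
  /\
  (forall w : 'cV[R]_n, minimal_zero A w -> supp w \subset supp u :|: supp v ->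
     exists c : R, 0 < c /\ (w = c *: u \/ w = c *: v)).
Proof.
move=> cA mu mv hK.
have P1 := part1 _ _ _ _ _ _ cA mu mv hK.
split => // w mw sw.
have [al [be [al0 be0 we]]] := P1 w (proj1 mw) sw.
have [nw [w0 qw]] := proj1 mw.
have [nu [u0 qu]] := proj1 mu.
have [nv [v0 qv]] := proj1 mv.
case: (eqVneq al 0) => [al_0|aln].
  exists be; split; last by right; rewrite we al_0 scale0r add0r.
  rewrite lt_def be0 andbT; apply/eqP => be_0; apply: w0.
  by rewrite we al_0 be_0 !scale0r addr0.
case: (eqVneq be 0) => [be_0|ben].
  exists al; split; last by left; rewrite we be_0 scale0r addr0.
  by rewrite lt_def al0 aln.
have al_0 : 0 < al by rewrite lt_def al0 aln.
have be_0 : 0 < be by rewrite lt_def be0 ben.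
exfalso; apply: ((proj2 mw) u (proj1 mu)).
have hk : k \in supp v :\: supp u by rewrite hK set11.
move: (hk); rewrite !inE => /andP [uk vk].
rewrite properE; apply/andP; split.
  apply/subsetP => i; rewrite !inE => ui.
  have ui0 : 0 < u i 0 by rewrite lt_def ui nu.
  rewrite we !mxE; apply/negP => /eqP h.
  have := mulr_gt0 al_0 ui0; have := mulr_ge0 be0 (nv i); lra.
apply/negP => /subsetP /(_ k); rewrite !inE (negbTE uk) we !mxE.
have vk0 : 0 < v k 0 by rewrite lt_def vk nv.
move: uk; rewrite negbK => /eqP ->; rewrite mulr0 add0r mulf_neq0 //.
  by move/(_ isT).
Qed.
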